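(* Let $n$ be a positive integer and let $\mathcal F$ be an $\mathcal N$-saturated family of subsets of $[n]$. Let $B'\subseteq[n]$ with $B'\notin\mathcal F$, and suppose there exists $B\in\mathcal F$ with $B\subset B'$, and that $B'$ is a minimal element of some induced copy of $\mathcal N$ in $\mathcal F\cup\{B'\}$. Then there exists an induced copy of $\mathcal N$ in $\mathcal F\cup\{B'\}$ in which $B'$ is a minimal element and the other minimal element contains $B$ as a subset.
   Context: The poset $\mathcal N$ has four elements $a,b,c,d$ with $a<c$, $b<c$, $b<d$ and no other comparabilities (so $a,b$ are its minimal elements and $c,d$ its maximal elements). A family $\mathcal Q$ of sets (ordered by inclusion) contains an induced copy of $\mathcal N$ if there are distinct sets in $\mathcal Q$ whose inclusion relations are exactly those of $a,b,c,d$ above. A family $\mathcal F$ of subsets of $[n]=\{1,\dots,n\}$ is $\mathcal N$-saturated if $\mathcal F$ contains no induced copy of $\mathcal N$, but for every $S\subseteq[n]$ with $S\notin\mathcal F$, the family $\mathcal F\cup\{S\}$ contains an induced copy of $\mathcal N$. *)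

(* Defs.v *)
(* Subsets of [n] are modelled as {set 'I_n}. *)
From mathcomp Require Import all_boot.
Set Implicit Arguments. Unset Strict Implicit. Unset Printing Implicit Defensive.

Definition incomp (n : nat) (A B : {set 'I_n}) : bool :=
  ~~ (A \subset B) && ~~ (B \subset A).

(* (a, b, c, d) is an induced copy of N: a < c, b < c, b < d and no other
   comparabilities (distinctness follows). a, b are the minimal elements. *)
Definition is_N (n : nat) (a b c d : {set 'I_n}) : bool :=
  [&& a \proper c, b \proper c, b \proper d,
      incomp a b, incomp a d & incomp c d].

Definition contains_N (n : nat) (Q : {set {set 'I_n}}) : Prop :=
  exists a b c d : {set 'I_n},
    [/\ a \in Q, b \in Q, c \in Q, d \in Q & is_N a b c d].

Definition N_saturated (n : nat) (F : {set {set 'I_n}}) : Prop :=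
  ~ contains_N F /\ (forall S : {set 'I_n}, S \notin F -> contains_N (S |: F)).

(* Main.v *)
Require Import Defs.
From mathcomp Require Import all_boot.

Section Aux.
Variable n : nat.
Implicit Types (F : {set {set 'I_n}}) (a b c d A B C D E W p q r s T : {set 'I_n}).

Lemma nN F (nf : ~ contains_N F) a b c d :
  a \in F -> b \in F -> c \in F -> d \in F -> ~~ is_N a b c d.
Proof. by move=> *; apply/negP => h; apply: nf; exists a, b, c, d. Qed.
Arguments nN {F} nf {a b c d}.

Lemma is_NP a b c d : is_N a b c d ->
  [/\ a \proper c, b \proper c, b \proper d, incomp a b & incomp a d /\ incomp c d].
Proof. by case/and5P => ? ? ? ? /andP[]. Qed.

Lemma nb (P : bool) : ~~ P -> P -> false.
Proof. by case: P. Qed.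

Lemma incompE A B : incomp A B = ~~ (A \subset B) && ~~ (B \subset A).
Proof. by []. Qed.

Definition TT F C D := \bigcup_(W in F | W \subset C :&: D) W.

Lemma TT_sup F C D W : W \in F -> W \subset C :&: D -> W \subset TT F C D.
Proof. by move=> h1 h2; apply: (bigcup_sup W); rewrite h1 h2. Qed.

Lemma TT_min F C D A :
  (forall W, W \in F -> W \subset C :&: D -> W \subset A) -> TT F C D \subset A.
Proof. by move=> h; apply/bigcupsP => W /andP[]; apply: h. Qed.

Lemma TT_sub F C D : TT F C D \subset C :&: D.
Proof. by apply: TT_min. Qed.

Lemma TT_in F C D : ~ contains_N F ->
  (forall S, S \notin F -> contains_N (S |: F)) ->
  C \in F -> D \in F -> incomp C D -> TT F C D \in F.
Proof.
move=> nf sat CF DF CD.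
set T := TT F C D.
have TC : T \subset C by apply: subset_trans (TT_sub F C D) _; apply: subsetIl.
have TD : T \subset D by apply: subset_trans (TT_sub F C D) _; apply: subsetIr.
have hsup := @TT_sup F C D. have hmin := @TT_min F C D.
move: CD; rewrite incompE => /andP[nCD nDC].
have roleA : forall q r s, q \in F -> r \in F -> s \in F -> ~~ is_N T q r s.
  move=> q r s qF rF sF; apply/negP => /is_NP[Tr qr qs].
  rewrite !incompE => /andP[nTq nqT] [/andP[nTs nsT] rs].
  have : T \subset s; last by rewrite (negbTE nTs).
  apply: hmin => W WF WX; have WT := hsup W WF WX.
  have := nN nf WF qF rF sF.
  rewrite /is_N (sub_proper_trans WT Tr) qr qs !incompE rs /=.
  have -> : (q \subset W) = false.
    by apply/negP => qW; move: nqT; rewrite (subset_trans qW WT).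
  have -> : (s \subset W) = false.
    by apply/negP => sW; move: nsT; rewrite (subset_trans sW WT).
  rewrite /= !andbT => /nandP[/negPn Wq|/negPn //].
  exact: subset_trans Wq (proper_sub qs).
have roleB : forall p r s, p \in F -> r \in F -> s \in F -> ~~ is_N p T r s.
  move=> p r s pF rF sF; apply/negP => /is_NP[pr Tr Ts].
  rewrite !incompE => /andP[npT nTp] [ps rs].
  have : T \subset p; last by rewrite (negbTE nTp).
  apply: hmin => W WF WX; have WT := hsup W WF WX.
  have := nN nf pF WF rF sF.
  rewrite /is_N (sub_proper_trans WT Tr) (sub_proper_trans WT Ts) pr !incompE ps rs /=.
  have -> : (p \subset W) = false.
    by apply/negP => pW; move: npT; rewrite (subset_trans pW WT).
  by rewrite /= !andbT => /negPn.
have roleC : forall p q s, p \in F -> q \in F -> s \in F -> ~~ is_N p q T s.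
  move=> p q s pF qF sF; apply/negP => /is_NP[pT qT qs pq [ps]].
  rewrite !incompE => /andP[nTs nsT].
  have key : forall E, E \in F -> T \subset E -> ~~ (E \subset s) -> s \subset E.
    move=> E EF TE nEs; have := nN nf pF qF EF sF.
    rewrite /is_N (proper_sub_trans pT TE) (proper_sub_trans qT TE) qs pq ps !incompE /=.
    by rewrite nEs /= => /negPn.
  have nCs : ~~ (C \subset s) by apply/negP => Cs; move: nTs; rewrite (subset_trans TC Cs).
  have nDs : ~~ (D \subset s) by apply/negP => Ds; move: nTs; rewrite (subset_trans TD Ds).
  have sX : s \subset C :&: D by rewrite subsetI (key C CF TC nCs) (key D DF TD nDs).
  by move: nsT; rewrite (hsup s sF sX).
have roleD : forall p q r, p \in F -> q \in F -> r \in F -> ~~ is_N p q r T.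
  move=> p q r pF qF rF; apply/negP => /is_NP[pr qr qT pq].
  rewrite !incompE => [[/andP[npT nTp] /andP[nrT nTr]]].
  have key : forall E, E \in F -> T \subset E -> p \subset E.
    move=> E EF TE; have := nN nf pF qF rF EF.
    rewrite /is_N pr qr (proper_sub_trans qT TE) pq !incompE /=.
    have -> : (E \subset p) = false.
      by apply/negP => Ep; move: nTp; rewrite (subset_trans TE Ep).
    have -> : (E \subset r) = false.
      by apply/negP => Er; move: nTr; rewrite (subset_trans TE Er).
    rewrite /= !andbT => /nandP[/negPn //|/negPn rE].
    exact: subset_trans (proper_sub pr) rE.
  have pX : p \subset C :&: D by rewrite subsetI (key C CF TC) (key D DF TD).
  by move: npT; rewrite (hsup p pF pX).
case: (boolP (T \in F)) => // TnF.
have [a [b [c [d [aF bF cF dF hN]]]]] := sat T TnF.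
move: aF bF cF dF hN.
move=> /setU1P[->|aF] /setU1P[->|bF] /setU1P[->|cF] /setU1P[->|dF];
  apply: nb; first [exact: roleA | exact: roleB | exact: roleC | exact: roleD
    | exact: (nN nf aF bF cF dF) | by rewrite /is_N !incompE ?properE ?subxx /= ?andbF].
Qed.

Lemma inF F B' x : x \in B' |: F -> x != B' -> x \in F.
Proof. by case/setU1P => [->|//]; rewrite eqxx. Qed.

Lemma incomp_neq A B : incomp A B -> A != B.
Proof. by rewrite incompE; apply: contraTneq => ->; rewrite subxx. Qed.

End Aux.
Arguments nN {n F} nf {a b c d}.
Arguments TT_in {n F C D}.
Arguments TT_sub {n}.
Arguments TT {n}.

Theorem lemma3p2 (n : nat) (F : {set {set 'I_n}}) (B B' : {set 'I_n}) :
  0 < n ->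
  N_saturated F ->
  B' \notin F ->
  B \in F ->
  B \proper B' ->
  (exists a b c d : {set 'I_n},
      [/\ [/\ a \in B' |: F, b \in B' |: F, c \in B' |: F & d \in B' |: F],
          is_N a b c d & (a = B' \/ b = B')]) ->
  exists a b c d : {set 'I_n},
    [/\ [/\ a \in B' |: F, b \in B' |: F, c \in B' |: F & d \in B' |: F],
        is_N a b c d &
        ((a = B' /\ B \subset b) \/ (b = B' /\ B \subset a))].
Proof.
move=> _ [nf sat] B'nF BF BB' [a [b [c [d [[aF bF cF dF] hN [ea|eb]]]]]].
- subst a. have hN' := hN.
  move/is_NP: hN' => [B'c bc bd B'b [B'd cd]].
  have bF' : b \in F by apply: inF bF _; rewrite eq_sym; apply: incomp_neq.
  have dF' : d \in F by apply: inF dF _; rewrite eq_sym; apply: incomp_neq.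
  have cF' : c \in F by apply: inF cF _; apply: contraTneq B'c => ->; rewrite properE subxx andbF.
  move: B'b B'd cd; rewrite !incompE => /andP[nB'b nbB'] /andP[nB'd ndB'] /andP[ncd ndc].
  have Bc : B \proper c := proper_trans BB' B'c.
  case: (boolP (B \subset b)) => Bb.
    by exists B', b, c, d; split => //; left.
  have Bd : B \subset d.
    apply/negPn/negP => nBd.
    have := nN nf BF bF' cF' dF'; rewrite /is_N Bc bc bd !incompE Bb nBd ncd ndc /= !andbT.
    move/negP; apply; apply/andP; split; apply/negP => h.
      by move: nbB'; rewrite (subset_trans h (proper_sub BB')).
    by move: ndB'; rewrite (subset_trans h (proper_sub BB')).
  have cdI : incomp c d by rewrite incompE ncd ndc.
  have TF := TT_in nf sat cF' dF' cdI.
  set T := TT F c d in TF.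
  have TX : T \subset c :&: d := TT_sub F c d.
  have Tc : T \subset c by apply: subset_trans TX (subsetIl _ _).
  have Td : T \subset d by apply: subset_trans TX (subsetIr _ _).
  have BT : B \subset T by apply: TT_sup => //; rewrite subsetI (proper_sub Bc).
  have bT : b \subset T by apply: TT_sup => //; rewrite subsetI (proper_sub bc) (proper_sub bd).
  exists B', T, c, d; split => //.
  - by split; rewrite ?setU11 // setU1r.
  - rewrite /is_N B'c !incompE ncd ndc nB'd ndB' !properE Tc Td /= !andbT.
    apply/and4P; split.
    + by apply/negP => cT; move: ncd; rewrite (subset_trans cT Td).
    + by apply/negP => dT; move: ndc; rewrite (subset_trans dT Tc).
    + by apply/negP => B'T; move: nB'd; rewrite (subset_trans B'T Td).
    + by apply/negP => TB'; move: nbB'; rewrite (subset_trans bT TB').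
  - by left.
- subst b. have hN' := hN.
  move/is_NP: hN' => [ac B'c B'd aB' [ad cd]].
  have aF' : a \in F by apply: inF aF _; apply: incomp_neq.
  have cF' : c \in F by apply: inF cF _; apply: contraTneq B'c => ->; rewrite properE subxx andbF.
  have dF' : d \in F by apply: inF dF _; apply: contraTneq B'd => ->; rewrite properE subxx andbF.
  exists a, B', c, d; split => //; right; split => //.
  apply/negPn/negP => nBa.
  have := nN nf aF' BF cF' dF'.
  rewrite /is_N ac (proper_trans BB' B'c) (proper_trans BB' B'd) ad cd !incompE nBa /= !andbT.
  move=> /negPn aB; move: aB'; rewrite incompE (subset_trans aB (proper_sub BB')).
  by [].
Qed.
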